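(* Let $f:D^n\to\mathbb{R}^d$ have finite global sensitivity $GS_f>0$, let $T\in\mathbb{R}$, and let $U=\{x\in D^n: LS_f(x)>T\}$, assumed nonempty. For $x\in D^n$ let $ud(x)=\min_{y\in U}d(y,x)$. Let $\beta>0$ satisfy $$\beta\le\min_{x\notin U}\frac{1}{ud(x)}\ln\Big(\frac{GS_f}{LS_f(x)}\Big)$$ (with the convention $\ln(GS_f/0)=+\infty$). Then $S(x)=GS_f\cdot e^{-\beta\cdot ud(x)}$ is a $\beta$-smooth upper bound on the local sensitivity of $f$.
   Context: $D^n$ denotes the set of datasets consisting of $n$ elements; Hamming distance $d(x,y)=|\{i:x_i\neq y_i\}|$; neighbors satisfy $d(x,y)=1$. Global sensitivity: $GS_f=\max_{x,y:d(x,y)=1}\|f(x)-f(y)\|_1$. Local sensitivity: $LS_f(x)=\max_{y:d(x,y)=1}\|f(x)-f(y)\|_1$. For $\beta>0$, $S:D^n\to\mathbb{R}$ is a $\beta$-smooth upper bound on the local sensitivity of $f$ if $S(x)\ge LS_f(x)$ for all $x$ and $S(x)\le e^{\beta}S(y)$ for all $x,y$ with $d(x,y)=1$. *)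

(* Defs.v *)
From HB Require Import structures.
From mathcomp Require Import all_boot all_order all_algebra.
From mathcomp Require Import all_classical all_reals all_analysis.
Set Implicit Arguments. Unset Strict Implicit. Unset Printing Implicit Defensive.
Import Order.TTheory GRing.Theory Num.Theory.
Local Open Scope classical_set_scope.
Local Open Scope ring_scope.

Definition hdist (D : eqType) (n : nat) (x y : 'I_n -> D) : nat :=
  #|[pred i | x i != y i]|.

Definition l1dist (R : realType) (d : nat) (u v : 'I_d -> R) : R :=
  \sum_(i < d) `|u i - v i|.

Definition GS_set (R : realType) (D : eqType) (n d : nat)
  (f : ('I_n -> D) -> 'I_d -> R) : set R :=
  [set r | exists x y, hdist x y = 1%N /\ r = l1dist (f x) (f y)].

Definition GS (R : realType) (D : eqType) (n d : nat)
  (f : ('I_n -> D) -> 'I_d -> R) : R := sup (GS_set f).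

Definition LS (R : realType) (D : eqType) (n d : nat)
  (f : ('I_n -> D) -> 'I_d -> R) (x : 'I_n -> D) : R :=
  sup [set r | exists y, hdist x y = 1%N /\ r = l1dist (f x) (f y)].

Definition smooth_ub (R : realType) (D : eqType) (n d : nat)
  (f : ('I_n -> D) -> 'I_d -> R) (beta : R) (S : ('I_n -> D) -> R) : Prop :=
  (forall x, LS f x <= S x) /\
  (forall x y, hdist x y = 1%N -> S x <= expR beta * S y).

(* ud(x) = min_{y in U} d(y,x), as a real number (the min of a set of
   naturals, hence attained when U is nonempty). *)
Definition ud (R : realType) (D : eqType) (n : nat) (U : set ('I_n -> D))
  (x : 'I_n -> D) : R :=
  inf [set (hdist y x)%:R | y in U].
Arguments ud {R D n} U x.

(* Main.v *)
Require Import Defs.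
From HB Require Import structures.
From mathcomp Require Import all_boot all_order all_algebra.
From mathcomp Require Import all_classical all_reals all_analysis.
From mathcomp Require Import lra.
Import Order.TTheory GRing.Theory Num.Theory.
Local Open Scope classical_set_scope.
Local Open Scope ring_scope.

Lemma hdist_tri (D : eqType) (n : nat) (x y z : 'I_n -> D) :
  (hdist z y <= hdist z x + hdist x y)%N.
Proof.
rewrite /hdist -cardUI; apply: leq_trans (leq_addr _ _).
apply: (@subset_leq_card _ [pred i | z i != y i]).
apply/fintype.subsetP => i; rewrite !inE /=.
by case: (eqVneq (z i) (x i)) => [->|] //= _ ->; rewrite orbT.
Qed.

Lemma ud_ge0 (R : realType) (D : eqType) (n : nat) (U : set ('I_n -> D)) x :
  U !=set0 -> 0 <= ud U x :> R.
Proof.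
case=> y Uy; apply: lb_le_inf; first by exists (hdist y x)%:R, y.
by move=> r [z _ <-].
Qed.

Lemma ud_le (R : realType) (D : eqType) (n : nat) (U : set ('I_n -> D)) x z :
  U z -> ud U x <= (hdist z x)%:R :> R.
Proof.
move=> Uz; apply: ge_inf; last by exists z.
by exists 0 => r [w _ <-].
Qed.

Arguments hdist_tri {D n} x y z.
Arguments ud_ge0 {R D n U} x.
Arguments ud_le {R D n U} x z.

Theorem theorem5 (R : realType) (D : eqType) (n d : nat)
  (f : ('I_n -> D) -> 'I_d -> R) (T beta : R) :
  has_ubound (GS_set f) ->
  0 < GS f ->
  let U := [set x | T < LS f x] in
  U !=set0 ->
  0 < beta ->
  (forall x, ~ U x -> 0 < LS f x ->
     beta <= (ud U x)^-1 * ln (GS f / LS f x)) ->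
  smooth_ub f beta (fun x => GS f * expR (- (beta * ud U x))).
Proof.
move=> hub GSp U Une bp hb; split.
- move=> x.
  have LSGS : LS f x <= GS f.
    rewrite /LS.
    set E := [set r | _].
    have [En|E0] := pselect (E !=set0).
      apply: ge_sup => // r [y [hy ->]].
      by apply: ub_le_sup => //; exists x, y.
    have -> : E = set0 by apply/funext => r; apply/propext; split => // Er; apply: E0; exists r.
    by rewrite sup0 ltW.
  have [Ux|nUx] := pselect (U x).
    have -> : ud U x = 0 :> R.
      apply/eqP; rewrite eq_le ud_ge0 // andbT.
      apply: le_trans (ud_le x x Ux) _.
      have -> : hdist x x = 0%N.
        by rewrite /hdist; apply: eq_card0 => i; rewrite !inE eqxx.
      by [].
    by rewrite mulr0 oppr0 expR0 mulr1.
  have [LSle|LSp] := leP (LS f x) 0.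
    by apply: le_trans LSle _; rewrite mulr_ge0 ?expR_ge0 ?ltW.
  have hbx := hb x nUx LSp.
  have u0 : 0 <= (ud U x : R) := ud_ge0 x Une.
  have up : 0 < (ud U x : R).
    rewrite lt_neqAle u0 andbT; apply/negP => /eqP u00.
    by move: hbx; rewrite -u00 invr0 mul0r leNgt bp.
  have h1 : beta * ud U x <= ln (GS f / LS f x).
    rewrite -ler_pdivlMr // mulrC; exact: hbx.
  have h2 : expR (beta * ud U x) <= GS f / LS f x.
    by rewrite -[X in _ <= X]lnK ?ler_expR // posrE divr_gt0.
  rewrite expRN -(ler_pM2r (expR_gt0 (beta * ud U x))) mulrVK; last first.
    by rewrite unitfE gt_eqF ?expR_gt0.
  by rewrite mulrC -ler_pdivlMr.
- move=> x y hxy.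
  rewrite mulrCA -expRD ler_pM2l // ler_expR.
  have : (ud U y : R) <= ud U x + 1.
    rewrite -lerBlDr; apply: lb_le_inf.
      by case: Une => z Uz; exists (hdist z x)%:R, z.
    move=> r [z Uz <-]; rewrite lerBlDr.
    apply: le_trans (ud_le y z Uz) _.
    by have := hdist_tri x y z; rewrite hxy -(ler_nat R) natrD.
  move=> h.
  have : beta * ud U y <= beta * (ud U x + 1) by rewrite ler_wpM2l // ltW.
  rewrite mulrDr mulr1.
  move: (beta * ud U x) (beta * ud U y) => a b; lra.
Qed.
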